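(* Let $\mathcal{C}$ be a Garside category of finite type, let $\mathcal{G}$ be its enveloping Garside groupoid, let $x$ be an object of $\mathcal{G}$, and let $G=\mathcal{G}_x$ be the isotropy group at $x$ (a weak Garside group of finite type). Then $G$ acts geometrically (properly and cocompactly by graph automorphisms) on a Helly graph.
   Context: Let $\mathcal{C}$ be a small category; arrows compose like paths: $f\colon x\to y$ and $g\colon y\to z$ compose to $fg\colon x\to z$. A nontrivial (non-identity) morphism is an atom if it cannot be written as a product of two non-identity morphisms. $\mathcal{C}$ is cancellative if $afb=agb$ implies $f=g$, and homogeneous if there is $l$ from morphisms to $\mathbb{Z}_{\ge 0}$ with $l(fg)=l(f)+l(g)$ and $l(f)=0$ iff $f$ is an identity. For morphisms $f,g$ write $f\preccurlyeq g$ if $g=fz$ for some morphism $z$, and $g\succcurlyeq f$ if $g=zf$ for some morphism $z$; $\mathcal{C}_{x\to}$ (resp. $\mathcal{C}_{\to x}$) denotes the morphisms with source (resp. target) $x$. Given an automorphism $\phi$ of $\mathcal{C}$ and a natural transformation $\Delta$ from the identity functor to $\phi$, write $\Delta_x\colon x\to\phi(x)$ and $\Delta^x:=\Delta_{\phi^{-1}(x)}\colon\phi^{-1}(x)\to x$. A morphism $f\colon x\to y$ is simple if there is $f^*\colon y\to\phi(x)$ with $ff^*=\Delta_x$. $(\mathcal{C},\phi,\Delta)$ is a homogeneous categorical Garside structure if $\mathcal{C}$ is homogeneous and cancellative, all atoms are simple, and for every object $x$ the posets $(\mathcal{C}_{x\to},\preccurlyeq)$ and $(\mathcal{C}_{\to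 x},\succcurlyeq)$ are lattices. A Garside category is a category admitting such $\phi,\Delta$; it has finite type if it has finitely many simple morphisms. The Garside groupoid $\mathcal{G}$ is the enveloping groupoid of $\mathcal{C}$ (obtained by formally inverting all morphisms; $\mathcal{C}\to\mathcal{G}$ is injective). The isotropy group $\mathcal{G}_x$ is the group of morphisms $x\to x$. A graph is Helly if every family of pairwise intersecting (combinatorial) balls in its vertex set has nonempty intersection. *)

(* Defs.v *)
From Stdlib Require Import List.

(* comp f g = "fg" : first f, then g; meaningful when tgt f = src g.  *)
Record Cat : Type := {
  ob : Type;
  mor : Type;
  src : mor -> ob;
  tgt : mor -> ob;
  idm : ob -> mor;
  comp : mor -> mor -> mor;
  src_id : forall o, src (idm o) = o;
  tgt_id : forall o, tgt (idm o) = o;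
  src_comp : forall f g, tgt f = src g -> src (comp f g) = src f;
  tgt_comp : forall f g, tgt f = src g -> tgt (comp f g) = tgt g;
  id_comp : forall f, comp (idm (src f)) f = f;
  comp_id : forall f, comp f (idm (tgt f)) = f;
  comp_assoc : forall f g h, tgt f = src g -> tgt g = src h ->
    comp (comp f g) h = comp f (comp g h)
}.

Arguments src {c}.
Arguments tgt {c}.
Arguments idm {c}.
Arguments comp {c}.

Record Functor (C D : Cat) : Type := {
  fob : ob C -> ob D;
  fmor : mor C -> mor D;
  fsrc : forall f, src (fmor f) = fob (src f);
  ftgt : forall f, tgt (fmor f) = fob (tgt f);
  fid : forall o, fmor (idm o) = idm (fob o);
  fcomp : forall f g, tgt f = src g -> fmor (comp f g) = comp (fmor f) (fmor g)
}.

Arguments fob {C D}.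
Arguments fmor {C D}.

Definition is_id {C : Cat} (f : mor C) : Prop := exists o, f = idm o.

Definition is_automorphism {C : Cat} (phi : Functor C C) : Prop :=
  exists psi : Functor C C,
    (forall o, fob psi (fob phi o) = o) /\ (forall o, fob phi (fob psi o) = o) /\
    (forall f, fmor psi (fmor phi f) = f) /\ (forall f, fmor phi (fmor psi f) = f).

Definition is_nat_trans_id {C : Cat} (phi : Functor C C) (Delta : ob C -> mor C) : Prop :=
  (forall o, src (Delta o) = o /\ tgt (Delta o) = fob phi o) /\
  (forall f, comp f (Delta (tgt f)) = comp (Delta (src f)) (fmor phi f)).

Definition is_atom {C : Cat} (f : mor C) : Prop :=
  ~ is_id f /\
  ~ (exists g h, tgt g = src h /\ ~ is_id g /\ ~ is_id h /\ f = comp g h).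

Definition cancellative (C : Cat) : Prop :=
  forall a f g b : mor C,
    tgt a = src f -> tgt f = src b -> tgt a = src g -> tgt g = src b ->
    comp (comp a f) b = comp (comp a g) b -> f = g.

Definition homogeneous (C : Cat) : Prop :=
  exists l : mor C -> nat,
    (forall f g, tgt f = src g -> l (comp f g) = l f + l g) /\
    (forall f, l f = 0 <-> is_id f).

Definition is_simple {C : Cat} (phi : Functor C C) (Delta : ob C -> mor C)
  (f : mor C) : Prop :=
  exists fs : mor C, src fs = tgt f /\ tgt fs = fob phi (src f) /\
    comp f fs = Delta (src f).

Definition prefix {C : Cat} (f g : mor C) : Prop :=
  exists z, tgt f = src z /\ g = comp f z.
Definition suffix {C : Cat} (f g : mor C) : Prop :=
  exists z, tgt z = src f /\ g = comp z f.

Definition is_lattice {T : Type} (S : T -> Prop) (le : T -> T -> Prop) : Prop :=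
  forall a b, S a -> S b ->
    (exists j, S j /\ le a j /\ le b j /\
       forall c, S c -> le a c -> le b c -> le j c) /\
    (exists m, S m /\ le m a /\ le m b /\
       forall c, S c -> le c a -> le c b -> le c m).

Definition garside_structure (C : Cat) (phi : Functor C C) (Delta : ob C -> mor C) : Prop :=
  is_automorphism phi /\ is_nat_trans_id phi Delta /\
  homogeneous C /\ cancellative C /\
  (forall f : mor C, is_atom f -> is_simple phi Delta f) /\
  (forall x : ob C,
     is_lattice (fun f : mor C => src f = x) prefix /\
     is_lattice (fun f : mor C => tgt f = x) suffix).

Definition garside_finite_type (C : Cat) : Prop :=
  exists (phi : Functor C C) (Delta : ob C -> mor C),
    garside_structure C phi Delta /\
    exists l : list (mor C), forall f, is_simple phi Delta f -> In f l.

Definition is_groupoid (C : Cat) : Prop :=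
  forall f : mor C, exists g : mor C,
    src g = tgt f /\ tgt g = src f /\
    comp f g = idm (src f) /\ comp g f = idm (tgt f).

Definition enveloping (C E : Cat) (iota : Functor C E) : Prop :=
  is_groupoid E /\
  forall (H : Cat) (F : Functor C H), is_groupoid H ->
    exists F' : Functor E H,
      ((forall o, fob F' (fob iota o) = fob F o) /\
       (forall f, fmor F' (fmor iota f) = fmor F f)) /\
      (forall F'' : Functor E H,
         (forall o, fob F'' (fob iota o) = fob F o) ->
         (forall f, fmor F'' (fmor iota f) = fmor F f) ->
         (forall o, fob F'' o = fob F' o) /\ (forall f, fmor F'' f = fmor F' f)).

(* isotropy group at x: morphisms x -> x, with product g*h := comp g h *)
Definition in_isotropy {E : Cat} (x : ob E) (g : mor E) : Prop :=
  src g = x /\ tgt g = x.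

Definition simple_graph {V : Type} (adj : V -> V -> Prop) : Prop :=
  (forall u v, adj u v -> adj v u) /\ (forall u, ~ adj u u).

Fixpoint dist_le {V : Type} (adj : V -> V -> Prop) (n : nat) (u v : V) : Prop :=
  match n with
  | 0 => u = v
  | S m => dist_le adj m u v \/ exists w, adj u w /\ dist_le adj m w v
  end.

Definition connected_graph {V : Type} (adj : V -> V -> Prop) : Prop :=
  inhabited V /\ forall u v, exists n, dist_le adj n u v.

Definition ball {V : Type} (adj : V -> V -> Prop) (c : V) (r : nat) (u : V) : Prop :=
  dist_le adj r c u.

Definition helly_graph {V : Type} (adj : V -> V -> Prop) : Prop :=
  simple_graph adj /\ connected_graph adj /\
  forall (I : Type) (c : I -> V) (r : I -> nat),
    (forall i j, exists u, ball adj (c i) (r i) u /\ ball adj (c j) (r j) u) ->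
    exists u, forall i, ball adj (c i) (r i) u.

Definition isotropy_action {E : Cat} (x : ob E) {V : Type}
  (adj : V -> V -> Prop) (act : mor E -> V -> V) : Prop :=
  (forall v, act (idm x) v = v) /\
  (forall g h v, in_isotropy x g -> in_isotropy x h ->
     act (comp g h) v = act g (act h v)) /\
  (forall g u v, in_isotropy x g -> (adj u v <-> adj (act g u) (act g v))).

Definition proper_action {E : Cat} (x : ob E) {V : Type}
  (adj : V -> V -> Prop) (act : mor E -> V -> V) : Prop :=
  forall (v : V) (r : nat), exists l : list (mor E),
    forall g, in_isotropy x g -> dist_le adj r v (act g v) -> In g l.

Definition cocompact_action {E : Cat} (x : ob E) {V : Type}
  (act : mor E -> V -> V) : Prop :=
  exists K : list V, forall v, exists k g, In k K /\ in_isotropy x g /\ v = act g k.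

Definition acts_geometrically {E : Cat} (x : ob E) {V : Type}
  (adj : V -> V -> Prop) (act : mor E -> V -> V) : Prop :=
  isotropy_action x adj act /\ proper_action x adj act /\ cocompact_action x act.

(* Main.v *)
Require Import Defs.
From Stdlib Require Import List Lia Arith PeanoNat.
From Stdlib Require Import Classical ClassicalEpsilon ProofIrrelevance.

Section Groupoid.
Variable K : Cat.
Hypothesis HK : is_groupoid K.

Definition ginv (f : mor K) : mor K :=
  proj1_sig (constructive_indefinite_description _ (HK f)).

Lemma ginv_spec f : src (ginv f) = tgt f /\ tgt (ginv f) = src f /\
  comp f (ginv f) = idm (src f) /\ comp (ginv f) f = idm (tgt f).
Proof. unfold ginv. destruct (constructive_indefinite_description _ _) as [g Hg]. exact Hg. Qed.

Lemma ginv_src f : src (ginv f) = tgt f. Proof. apply ginv_spec. Qed.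
Lemma ginv_tgt f : tgt (ginv f) = src f. Proof. apply ginv_spec. Qed.
Lemma ginv_r f : comp f (ginv f) = idm (src f). Proof. apply ginv_spec. Qed.
Lemma ginv_l f : comp (ginv f) f = idm (tgt f). Proof. apply ginv_spec. Qed.

Lemma gcancel_l (h u w : mor K) : tgt h = src u -> tgt h = src w ->
  comp h u = comp h w -> u = w.
Proof.
  intros H1 H2 E.
  rewrite <- (id_comp K u), <- (id_comp K w), <- H1, <- H2, <- ginv_l.
  rewrite !comp_assoc by (rewrite ?ginv_tgt; auto). now rewrite E.
Qed.

Lemma gcancel_r (h u w : mor K) : tgt u = src h -> tgt w = src h ->
  comp u h = comp w h -> u = w.
Proof.
  intros H1 H2 E.
  rewrite <- (comp_id K u), <- (comp_id K w), H1, H2, <- ginv_r.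
  rewrite <- !comp_assoc by (rewrite ?ginv_src; auto). now rewrite E.
Qed.

Lemma g_cc (f g : mor K) : tgt f = src g -> comp (comp f g) (ginv g) = f.
Proof.
  intros H. rewrite comp_assoc by (rewrite ?ginv_src; auto).
  rewrite ginv_r, <- H. apply comp_id.
Qed.

Lemma g_ic (g f : mor K) : tgt g = src f -> comp (ginv g) (comp g f) = f.
Proof.
  intros H. rewrite <- comp_assoc by (rewrite ?ginv_tgt; auto).
  rewrite ginv_l, H. apply id_comp.
Qed.

Lemma ginv_unique (f g : mor K) : tgt f = src g -> comp f g = idm (src f) -> g = ginv f.
Proof.
  intros H E. apply (gcancel_l f); auto. rewrite ginv_src; auto.
  rewrite E, ginv_r; auto.
Qed.

Lemma ginv_comp (f g : mor K) : tgt f = src g -> ginv (comp f g) = comp (ginv g) (ginv f).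
Proof.
  intros H. symmetry. apply ginv_unique.
  - rewrite tgt_comp by auto. rewrite src_comp by (rewrite ginv_tgt, ginv_src; congruence). now rewrite ginv_src.
  - assert (Hs : src (comp (ginv g) (ginv f)) = tgt g) by (rewrite src_comp, ginv_src; rewrite ?ginv_tgt, ?ginv_src; congruence).
    rewrite comp_assoc by auto.
    rewrite <- (comp_assoc K g) by (rewrite ?ginv_src, ?ginv_tgt; auto).
    rewrite ginv_r, <- H, <- (ginv_src f), id_comp, ginv_r. now rewrite src_comp.
Qed.

Lemma ginv_idm o : ginv (idm o) = idm o.
Proof.
  symmetry. apply ginv_unique. now rewrite src_id, tgt_id.
  rewrite src_id. assert (E := comp_id K (idm o)); rewrite tgt_id in E; exact E.
Qed.
End Groupoid.

Arguments ginv {K} HK f.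

Section FunctorGroupoid.
Variables K1 K2 : Cat.
Hypothesis H1 : is_groupoid K1.
Hypothesis H2 : is_groupoid K2.
Variable F : Functor K1 K2.

Lemma fmor_ginv f : fmor F (ginv H1 f) = ginv H2 (fmor F f).
Proof.
  apply ginv_unique.
  - rewrite ftgt, fsrc, ginv_src; auto.
  - rewrite <- fcomp by (rewrite ginv_src; auto). rewrite ginv_r, fid, fsrc; auto.
Qed.
End FunctorGroupoid.

Definition Fcompose {A B D : Cat} (F : Functor A B) (G : Functor B D) : Functor A D.
Proof.
  refine {| fob := fun o => fob G (fob F o); fmor := fun f => fmor G (fmor F f) |}.
  - intros f. now rewrite !fsrc.
  - intros f. now rewrite !ftgt.
  - intros o. now rewrite !fid.
  - intros f g H. rewrite fcomp by auto. apply fcomp. now rewrite ftgt, fsrc, H.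
Defined.

Definition Fidentity (A : Cat) : Functor A A.
Proof.
  refine {| fob := fun o => o; fmor := fun f => f |}; auto.
Defined.

Lemma comp_id' {K : Cat} (f : mor K) o : o = tgt f -> comp f (idm o) = f.
Proof. intros ->; apply comp_id. Qed.
Lemma id_comp' {K : Cat} (f : mor K) o : o = src f -> comp (idm o) f = f.
Proof. intros ->; apply id_comp. Qed.

Lemma g_mid {K : Cat} (HK : is_groupoid K) (f g h : mor K) :
  tgt f = src g -> src h = src g -> comp (comp f g) (comp (ginv HK g) h) = comp f h.
Proof.
  intros H1 H2. rewrite <- comp_assoc by (rewrite ?tgt_comp, ?ginv_tgt, ?ginv_src; congruence).
  rewrite g_cc by auto. auto.
Qed.

Lemma g_swap {K : Cat} (HK : is_groupoid K) (f g h k : mor K) :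
  tgt f = src g -> tgt h = src k -> src f = src h -> comp f g = comp h k ->
  comp (ginv HK h) f = comp k (ginv HK g).
Proof.
  intros H1 H2 H3 E.
  assert (Ht : tgt g = tgt k).
  { assert (tgt (comp f g) = tgt (comp h k)) by congruence. rewrite !tgt_comp in H; auto. }
  apply (gcancel_r K HK g).
  - rewrite tgt_comp by (rewrite ginv_tgt; congruence). auto.
  - rewrite tgt_comp by (rewrite ginv_src; congruence). apply ginv_tgt.
  - rewrite comp_assoc by (rewrite ?ginv_tgt; congruence).
    rewrite E. rewrite g_ic by auto.
    rewrite comp_assoc by (rewrite ?ginv_tgt, ?ginv_src; congruence).
    rewrite ginv_l. rewrite comp_id'; auto.
Qed.

Lemma g_cc' {K : Cat} (HK : is_groupoid K) (f g : mor K) :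
  tgt f = tgt g -> comp (comp f (ginv HK g)) g = f.
Proof.
  intros H. rewrite comp_assoc by (rewrite ?ginv_src, ?ginv_tgt; congruence).
  rewrite ginv_l. rewrite comp_id'; auto.
Qed.
Section Main.
Variable C : Cat.
Variables phi psi : Functor C C.
Variable Delta : ob C -> mor C.
Variable l : mor C -> nat.
Variable SL : list (mor C).
Hypothesis Hpp_o : forall o, fob psi (fob phi o) = o.
Hypothesis Hpp_o' : forall o, fob phi (fob psi o) = o.
Hypothesis Hpp_m : forall f, fmor psi (fmor phi f) = f.
Hypothesis Hpp_m' : forall f, fmor phi (fmor psi f) = f.
Hypothesis HDs : forall o, src (Delta o) = o.
Hypothesis HDt : forall o, tgt (Delta o) = fob phi o.
Hypothesis HDn : forall f, comp f (Delta (tgt f)) = comp (Delta (src f)) (fmor phi f).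
Hypothesis Hl_add : forall f g, tgt f = src g -> l (comp f g) = l f + l g.
Hypothesis Hl_0 : forall f, l f = 0 <-> is_id f.
Hypothesis Hcanc : cancellative C.
Hypothesis Hatom : forall f, is_atom f -> is_simple phi Delta f.
Hypothesis Hlat : forall x, is_lattice (fun f : mor C => src f = x) prefix.
Hypothesis HSL : forall f, is_simple phi Delta f -> In f SL.

Definition phOn n o := Nat.iter n (fob phi) o.
Definition phn n f := Nat.iter n (fmor phi) f.
Definition psOn n o := Nat.iter n (fob psi) o.
Definition psn n f := Nat.iter n (fmor psi) f.

Lemma phn_src n (f : mor C) : src (phn n f) = phOn n (src f).
Proof. induction n; simpl; auto. unfold phn, phOn in *; simpl. rewrite fsrc; congruence. Qed.
Lemma phn_tgt n (f : mor C) : tgt (phn n f) = phOn n (tgt f).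
Proof. induction n; simpl; auto. unfold phn, phOn in *; simpl. rewrite ftgt; congruence. Qed.
Lemma psn_src n (f : mor C) : src (psn n f) = psOn n (src f).
Proof. induction n; simpl; auto. unfold psn, psOn in *; simpl. rewrite fsrc; congruence. Qed.
Lemma psn_tgt n (f : mor C) : tgt (psn n f) = psOn n (tgt f).
Proof. induction n; simpl; auto. unfold psn, psOn in *; simpl. rewrite ftgt; congruence. Qed.

Lemma psOn_phOn n o : psOn n (phOn n o) = o.
Proof.
  revert o; induction n; intros o; auto. unfold psOn, phOn in *.
  rewrite Nat.iter_succ_r, Nat.iter_succ, Hpp_o. apply IHn.
Qed.
Lemma phOn_psOn n o : phOn n (psOn n o) = o.
Proof.
  revert o; induction n; intros o; auto. unfold psOn, phOn in *.
  rewrite Nat.iter_succ_r, Nat.iter_succ, Hpp_o'. apply IHn.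
Qed.
Lemma psn_phn n f : psn n (phn n f) = f.
Proof.
  revert f; induction n; intros f; auto. unfold psn, phn in *.
  rewrite Nat.iter_succ_r, Nat.iter_succ, Hpp_m. apply IHn.
Qed.
Lemma phn_psn n f : phn n (psn n f) = f.
Proof.
  revert f; induction n; intros f; auto. unfold psn, phn in *.
  rewrite Nat.iter_succ_r, Nat.iter_succ, Hpp_m'. apply IHn.
Qed.
Lemma phOn_inj n a b : phOn n a = phOn n b -> a = b.
Proof. intros E. rewrite <- (psOn_phOn n a), <- (psOn_phOn n b). congruence. Qed.
Lemma phOn_add n m o : phOn (n + m) o = phOn n (phOn m o).
Proof. apply Nat.iter_add. Qed.
Lemma psOn_add n m o : psOn (n + m) o = psOn n (psOn m o).
Proof. apply Nat.iter_add. Qed.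
Lemma phn_add n m f : phn (n + m) f = phn n (phn m f).
Proof. apply Nat.iter_add. Qed.
Lemma phOn_S n o : phOn (S n) o = fob phi (phOn n o).
Proof. reflexivity. Qed.
Lemma phOn_S' n o : phOn (S n) o = phOn n (fob phi o).
Proof. apply Nat.iter_succ_r. Qed.
Lemma phn_S' n f : phn (S n) f = phn n (fmor phi f).
Proof. apply Nat.iter_succ_r. Qed.
Lemma phOn_comm n o : phOn n (fob phi o) = fob phi (phOn n o).
Proof. apply Nat.iter_swap. Qed.
Lemma phn_comm n f : phn n (fmor phi f) = fmor phi (phn n f).
Proof. apply Nat.iter_swap. Qed.
Lemma phOn_0 o : phOn 0 o = o. Proof. reflexivity. Qed.
Lemma psOn_0 o : psOn 0 o = o. Proof. reflexivity. Qed.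
Lemma phn_0 f : phn 0 f = f. Proof. reflexivity. Qed.
Lemma psOn_phOn_add n k o : psOn (n + k) (phOn k o) = psOn n o.
Proof. rewrite psOn_add, psOn_phOn. reflexivity. Qed.

Lemma phn_id n o : phn n (idm o) = idm (phOn n o).
Proof. induction n; auto. unfold phn, phOn in *; simpl. rewrite IHn, fid; auto. Qed.

Lemma phn_comp n (f g : mor C) : tgt f = src g -> phn n (comp f g) = comp (phn n f) (phn n g).
Proof.
  intros H; induction n; auto. unfold phn in *; simpl. rewrite IHn, fcomp; auto.
  fold (phn n f) (phn n g). rewrite phn_tgt, phn_src; congruence.
Qed.

Lemma rcancel (f g b : mor C) : tgt f = src b -> tgt g = src b -> comp f b = comp g b -> f = g.
Proof.
  intros H1 H2 E.
  assert (Hs : src f = src g).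
  { rewrite <- (src_comp C f b), <- (src_comp C g b); congruence. }
  apply (Hcanc (idm (src f)) f g b); rewrite ?tgt_id; auto.
  rewrite !id_comp, Hs, id_comp. auto.
Qed.

Lemma lcancel (a f g : mor C) : tgt a = src f -> tgt a = src g -> comp a f = comp a g -> f = g.
Proof.
  intros H1 H2 E.
  assert (Ht : tgt f = tgt g).
  { rewrite <- (tgt_comp C a f), <- (tgt_comp C a g); congruence. }
  apply (Hcanc a f g (idm (tgt f))); rewrite ?src_id; auto.
  rewrite (comp_id' (comp a f)) by (rewrite tgt_comp; auto).
  rewrite (comp_id' (comp a g)) by (rewrite tgt_comp; auto). auto.
Qed.

Hint Rewrite src_id tgt_id HDs HDt phn_src phn_tgt psn_src psn_tgt fsrc ftgt
  Hpp_o Hpp_o' psOn_phOn phOn_psOn psOn_phOn_add phOn_comm phOn_0 psOn_0 phn_0 : catdb.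

Ltac side := solve [ autorewrite with catdb in *; first [ congruence
   | rewrite src_comp by side; side | rewrite tgt_comp by side; side
   | match goal with
     | H : context [src (comp _ _)] |- _ => rewrite src_comp in H by side; side
     | H : context [tgt (comp _ _)] |- _ => rewrite tgt_comp in H by side; side
     end ] ].

Fixpoint E (n : nat) (o : ob C) : mor C :=
  match n with 0 => idm o | S n => comp (Delta o) (E n (fob phi o)) end.

Lemma E_src n o : src (E n o) = o.
Proof.
  revert o; induction n; intros o; simpl. apply src_id.
  rewrite src_comp; auto. rewrite IHn; auto.
Qed.
Lemma E_tgt n o : tgt (E n o) = phOn n o.
Proof.
  revert o; induction n; intros o; simpl. apply tgt_id.
  rewrite tgt_comp by (rewrite E_src; auto). rewrite IHn. exact (eq_sym (phOn_S' n o)).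
Qed.
Hint Rewrite E_src E_tgt : catdb.

Lemma ph_Delta o : fmor phi (Delta o) = Delta (fob phi o).
Proof.
  assert (H := HDn (Delta o)). rewrite HDt, HDs in H.
  symmetry; apply (lcancel (Delta o)); try side; auto.
Qed.

Lemma E_nat n (f : mor C) : comp f (E n (tgt f)) = comp (E n (src f)) (phn n f).
Proof.
  revert f; induction n; intros f; simpl.
  - rewrite comp_id, id_comp. auto.
  - rewrite <- comp_assoc by side. rewrite HDn.
    rewrite comp_assoc by side.
    rewrite <- (ftgt C C phi f), IHn, (fsrc C C phi f).
    rewrite <- comp_assoc by side. f_equal. exact (eq_sym (phn_S' n f)).
Qed.

Lemma E_add n m o : E (n + m) o = comp (E n o) (E m (phOn n o)).
Proof.
  revert o; induction n; intros o; simpl.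
  - rewrite id_comp' by side. auto.
  - rewrite IHn, phOn_comm. rewrite comp_assoc by side. reflexivity.
Qed.

Lemma phn_E k n o : phn k (E n o) = E n (phOn k o).
Proof.
  revert o; induction n; intros o; simpl.
  - apply phn_id.
  - rewrite phn_comp by side. rewrite IHn.
    f_equal.
    + clear IHn. induction k; auto. unfold phn, phOn in *; simpl. rewrite IHk, ph_Delta; auto.
    + f_equal. rewrite <- phOn_S', phOn_S. reflexivity.
Qed.

Lemma E_S_r n o : E (S n) o = comp (E n o) (Delta (phOn n o)).
Proof.
  rewrite <- Nat.add_1_r, E_add. simpl. rewrite comp_id' by side. auto.
Qed.

Definition ext (a : mor C) k := comp a (E k (tgt a)).

Lemma ext_src (a : mor C) k : src (ext a k) = src a.
Proof. unfold ext; side. Qed.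
Lemma ext_tgt (a : mor C) k : tgt (ext a k) = phOn k (tgt a).
Proof. unfold ext; side. Qed.
Hint Rewrite ext_src ext_tgt : catdb.

Lemma ext_0 (a : mor C) : ext a 0 = a.
Proof. unfold ext; simpl. apply comp_id. Qed.

Lemma ext_ext (a : mor C) k k' : ext (ext a k) k' = ext a (k + k').
Proof.
  unfold ext at 1. rewrite ext_tgt. unfold ext.
  rewrite comp_assoc by side. rewrite E_add. auto.
Qed.

Lemma ext_comm (a : mor C) k k' : ext a (k + k') = ext a (k' + k).
Proof. rewrite Nat.add_comm; auto. Qed.

Lemma is_id_idm (q : mor C) : is_id q -> q = idm (src q).
Proof. intros [o ->]. rewrite src_id. auto. Qed.

Lemma l_idm o : l (idm o) = 0.
Proof. apply Hl_0. exists o; auto. Qed.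

Lemma prefix_refl (f : mor C) : prefix f f.
Proof. exists (idm (tgt f)). rewrite src_id, comp_id. auto. Qed.

Lemma prefix_comp (f z : mor C) : tgt f = src z -> prefix f (comp f z).
Proof. intros H. exists z. auto. Qed.

Lemma prefix_src (f g : mor C) : prefix f g -> src g = src f.
Proof. intros [z [H ->]]. side. Qed.

Lemma prefix_trans (f g h : mor C) : prefix f g -> prefix g h -> prefix f h.
Proof.
  intros [z [H1 ->]] [w [H2 ->]]. exists (comp z w).
  split. side. rewrite comp_assoc; auto. rewrite <- H2. side.
Qed.

Lemma prefix_l (f g : mor C) : prefix f g -> l f <= l g.
Proof. intros [z [H ->]]. rewrite Hl_add; auto. lia. Qed.

Lemma not_id_l (q : mor C) : ~ is_id q -> 0 < l q.
Proof. intros H. destruct (l q) eqn:E; [|lia]. exfalso. apply H, Hl_0; auto. Qed.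

Lemma decomp_left (q : mor C) : ~ is_id q ->
  exists a r, is_atom a /\ tgt a = src r /\ q = comp a r /\ l r < l q.
Proof.
  remember (l q) as n eqn:En. revert q En.
  induction n as [n IH] using (well_founded_induction lt_wf).
  intros q En Hq.
  destruct (classic (is_atom q)) as [Ha|Ha].
  - exists q, (idm (tgt q)). split; auto. split. now rewrite src_id.
    split. now rewrite comp_id. rewrite l_idm. pose proof (not_id_l q Hq). lia.
  - assert (exists g h, tgt g = src h /\ ~ is_id g /\ ~ is_id h /\ q = comp g h) as [g [h [H1 [H2 [H3 H4]]]]].
    { apply NNPP. intros Hn. apply Ha. split; auto. }
    assert (Hlq : l q = l g + l h) by (rewrite H4; auto).
    pose proof (not_id_l g H2). pose proof (not_id_l h H3).
    destruct (IH (l g) ltac:(lia) g eq_refl H2) as [a [r [A1 [A2 [A3 A4]]]]].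
    exists a, (comp r h). split; auto. split. rewrite src_comp; auto. rewrite <- H1, A3. side.
    split. rewrite H4, A3. rewrite comp_assoc; auto. rewrite <- H1, A3. side.
    rewrite Hl_add. lia. rewrite <- H1, A3. side.
Qed.

Lemma decomp_right (q : mor C) : ~ is_id q ->
  exists f a, is_atom a /\ tgt f = src a /\ q = comp f a /\ l f < l q.
Proof.
  remember (l q) as n eqn:En. revert q En.
  induction n as [n IH] using (well_founded_induction lt_wf).
  intros q En Hq.
  destruct (classic (is_atom q)) as [Ha|Ha].
  - exists (idm (src q)), q. split; auto. split. now rewrite tgt_id.
    split. now rewrite id_comp. rewrite l_idm. pose proof (not_id_l q Hq). lia.
  - assert (exists g h, tgt g = src h /\ ~ is_id g /\ ~ is_id h /\ q = comp g h) as [g [h [H1 [H2 [H3 H4]]]]].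
    { apply NNPP. intros Hn. apply Ha. split; auto. }
    assert (Hlq : l q = l g + l h) by (rewrite H4; auto).
    pose proof (not_id_l g H2). pose proof (not_id_l h H3).
    destruct (IH (l h) ltac:(lia) h eq_refl H3) as [f [a [A1 [A2 [A3 A4]]]]].
    exists (comp g f), a. split; auto. split. rewrite tgt_comp; auto. rewrite H1, A3. side.
    split. rewrite H4, A3. rewrite comp_assoc; auto. rewrite H1, A3. side.
    rewrite Hl_add. lia. rewrite H1, A3. side.
Qed.

Lemma prefix_E n (q : mor C) : l q <= n -> prefix q (E n (src q)).
Proof.
  revert q; induction n; intros q Hq.
  - assert (is_id q) by (apply Hl_0; lia). rewrite (is_id_idm q) at 1 by auto.
    simpl. apply prefix_refl.
  - destruct (classic (is_id q)) as [Hi|Hi].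
    + rewrite (is_id_idm q) at 1 by auto. exists (E (S n) (src q)). split. side.
      symmetry. apply id_comp'. side.
    + destruct (decomp_left q Hi) as [a [r [A1 [A2 [A3 A4]]]]].
      destruct (IHn r ltac:(lia)) as [w [W1 W2]].
      destruct (Hatom a A1) as [s [S1 [S2 S3]]].
      exists (comp w (phn n s)).
      assert (Ht : tgt q = src w) by (rewrite A3, <- W1; side).
      assert (Tw : tgt w = phOn n (src r)) by (rewrite <- (E_tgt n (src r)), W2; side).
      split. side.
      assert (Hsq : src q = src a) by (rewrite A3; side).
      rewrite Hsq. simpl. rewrite <- S3.
      rewrite comp_assoc by side. rewrite <- S2.
      rewrite E_nat. rewrite S1, A2, W2, A3.
      rewrite !comp_assoc; auto; side.
Qed.

Lemma id_simple o : is_simple phi Delta (idm o).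
Proof. exists (Delta o). rewrite HDs, tgt_id, src_id, HDt, id_comp'; auto. Qed.

Fixpoint plist (L : nat) : list (mor C) :=
  match L with
  | 0 => SL
  | S L => plist L ++ flat_map (fun f => map (fun a => comp f a) SL) (plist L)
  end.

Lemma plist_spec L (q : mor C) : l q <= L -> In q (plist L).
Proof.
  revert q; induction L; intros q Hq; simpl.
  - apply HSL. assert (is_id q) by (apply Hl_0; lia). rewrite (is_id_idm q) by auto. apply id_simple.
  - apply in_or_app. destruct (Nat.le_gt_cases (l q) L) as [H|H]; [left; auto|right].
    assert (Hi : ~ is_id q) by (intros Hi; apply Hl_0 in Hi; lia).
    destruct (decomp_right q Hi) as [f [a [A1 [A2 [A3 A4]]]]].
    apply in_flat_map. exists f. split. apply IHL; lia.
    apply in_map_iff. exists a. split; auto.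
Qed.

Definition Pr : Type := (mor C * nat)%type.
Definition mt (x : Pr) : ob C := psOn (snd x) (tgt (fst x)).
Definition rdiv (a : mor C) : Prop :=
  exists b, tgt b = fob psi (tgt a) /\ a = comp b (Delta (fob psi (tgt a))).
Definition reduced (x : Pr) : Prop := snd x = 0 \/ ~ rdiv (fst x).
Definition sim (x y : Pr) : Prop :=
  exists k j, snd x + k = snd y + j /\ ext (fst x) k = ext (fst y) j.

Lemma sim_refl x : sim x x.
Proof. exists 0, 0. auto. Qed.
Lemma sim_sym x y : sim x y -> sim y x.
Proof. intros [k [j [H1 H2]]]. exists j, k. auto. Qed.
Lemma sim_trans x y z : sim x y -> sim y z -> sim x z.
Proof.
  intros [k [j [H1 H2]]] [k' [j' [H1' H2']]]. exists (k + k'), (j' + j). split. lia.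
  rewrite <- ext_ext, H2, ext_ext, (Nat.add_comm j k'), <- ext_ext, H2', ext_ext. auto.
Qed.

Lemma sim_src x y : sim x y -> src (fst x) = src (fst y).
Proof. intros [k [j [H1 H2]]]. rewrite <- (ext_src (fst x) k), H2. apply ext_src. Qed.

Lemma sim_mt x y : sim x y -> mt x = mt y.
Proof.
  intros [k [j [H1 H2]]]. unfold mt.
  rewrite <- (psOn_phOn_add (snd x) k), <- (psOn_phOn_add (snd y) j), <- !ext_tgt, H2, H1. auto.
Qed.

Lemma ext1 (f : mor C) : ext f 1 = comp f (Delta (tgt f)).
Proof. unfold ext. simpl. rewrite comp_id' by side. auto. Qed.

Lemma red_exists x : exists y, sim x y /\ reduced y.
Proof.
  destruct x as [a n]. revert a; induction n; intros a.
  - exists (a, 0). split. apply sim_refl. left; auto.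
  - destruct (classic (rdiv a)) as [[b [Hb Ha]]|Hn].
    + destruct (IHn b) as [y [Y1 Y2]]. exists y. split; auto.
      apply sim_trans with (b, n); auto. exists 0, 1. simpl. split. lia.
      rewrite ext_0, ext1, Hb. auto.
    + exists (a, S n). split. apply sim_refl. right; auto.
Qed.

Lemma ext_cancel (f g : mor C) j : tgt f = tgt g -> ext f j = ext g j -> f = g.
Proof. unfold ext. intros H E. rewrite H in E. apply rcancel in E; auto; side. Qed.

Lemma red_unique_aux a n b m : n <= m -> sim (a, n) (b, m) -> reduced (a, n) -> reduced (b, m) ->
  (a, n) = (b, m).
Proof.
  intros Hnm [k [j [H1 H2]]] R1 R2. simpl in *.
  assert (Hk : k = (m - n) + j) by lia. subst k. rewrite <- ext_ext in H2.
  assert (Ht : tgt (ext a (m - n)) = tgt b).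
  { apply (phOn_inj j). rewrite <- !ext_tgt. congruence. }
  assert (H3 : ext a (m - n) = b).
  { apply (ext_cancel _ _ j); auto. }
  destruct (m - n) as [|d] eqn:Ed.
  - rewrite ext_0 in H3. subst. f_equal. lia.
  - exfalso. destruct R2 as [R2|R2]. simpl in R2. lia. apply R2. simpl.
    subst b. rewrite <- (Nat.add_1_r d), <- ext_ext, ext1. exists (ext a d).
    rewrite tgt_comp by side. rewrite HDt, Hpp_o. split; auto.
Qed.

Lemma red_unique x y : sim x y -> reduced x -> reduced y -> x = y.
Proof.
  destruct x as [a n], y as [b m]. intros S R1 R2.
  destruct (Nat.le_gt_cases n m).
  - apply red_unique_aux; auto.
  - symmetry. apply red_unique_aux; auto. lia. apply sim_sym; auto.
Qed.

Definition norm (x : Pr) : Pr := proj1_sig (constructive_indefinite_description _ (red_exists x)).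
Lemma norm_spec x : sim x (norm x) /\ reduced (norm x).
Proof. unfold norm. destruct (constructive_indefinite_description _ _) as [y Hy]. exact Hy. Qed.
Lemma norm_sim x : sim x (norm x). Proof. apply norm_spec. Qed.
Lemma norm_red x : reduced (norm x). Proof. apply norm_spec. Qed.
Lemma norm_eq x y : sim x y -> norm x = norm y.
Proof.
  intros H. apply red_unique; try apply norm_red.
  apply sim_trans with x. apply sim_sym, norm_sim. apply sim_trans with y; auto. apply norm_sim.
Qed.
Lemma norm_id x : reduced x -> norm x = x.
Proof. intros H. apply red_unique; [apply sim_sym, norm_sim | apply norm_red | auto]. Qed.
Lemma norm_src x : src (fst (norm x)) = src (fst x).
Proof. symmetry. apply sim_src, norm_sim. Qed.
Lemma norm_mt x : mt (norm x) = mt x.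
Proof. symmetry. apply sim_mt, norm_sim. Qed.

Definition raw (x y : Pr) : Pr := (comp (fst x) (phn (snd x) (fst y)), snd x + snd y).
Definition composable (x y : Pr) : Prop := mt x = src (fst y).

Lemma comp_cond x y : composable x y -> tgt (fst x) = src (phn (snd x) (fst y)).
Proof. unfold composable, mt. intros H. rewrite phn_src, <- H, phOn_psOn. auto. Qed.

Lemma raw_src x y : composable x y -> src (fst (raw x y)) = src (fst x).
Proof. intros H. apply comp_cond in H. simpl. side. Qed.

Lemma raw_mt x y : composable x y -> mt (raw x y) = mt y.
Proof.
  intros H. apply comp_cond in H. unfold mt; simpl.
  rewrite tgt_comp by auto. rewrite phn_tgt, Nat.add_comm, psOn_phOn_add. auto.
Qed.

Lemma ext_raw_l (a c : mor C) n k : tgt a = src (phn n c) ->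
  ext (comp a (phn n c)) k = comp (ext a k) (phn (k + n) c).
Proof.
  intros H. unfold ext. rewrite tgt_comp by auto.
  rewrite comp_assoc by side. rewrite E_nat. rewrite <- H.
  rewrite <- comp_assoc by side. rewrite phn_add. auto.
Qed.

Lemma ext_raw_r (a b : mor C) n k : tgt a = src (phn n b) ->
  ext (comp a (phn n b)) k = comp a (phn n (ext b k)).
Proof.
  intros H. unfold ext. rewrite tgt_comp by auto.
  rewrite comp_assoc by side. rewrite phn_comp by side. rewrite phn_E, phn_tgt. auto.
Qed.

Lemma raw_sim_l x y z : composable x z -> sim x y -> sim (raw x z) (raw y z).
Proof.
  intros Hc Hs. assert (Hc' : composable y z) by (unfold composable; rewrite <- (sim_mt x y Hs); auto).
  apply comp_cond in Hc. apply comp_cond in Hc'.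
  destruct Hs as [k [j [H1 H2]]].
  exists k, j. destruct x as [a n], y as [b m], z as [c p]; simpl in *. split. lia.
  rewrite !ext_raw_l by auto. rewrite H2. replace (k + n) with (j + m) by lia. auto.
Qed.

Lemma raw_sim_r x y z : composable x y -> sim y z -> sim (raw x y) (raw x z).
Proof.
  intros Hc Hs. assert (Hc' : composable x z) by (unfold composable; rewrite Hc; apply sim_src; auto).
  apply comp_cond in Hc. apply comp_cond in Hc'.
  destruct Hs as [k [j [H1 H2]]].
  exists k, j. destruct x as [a n], y as [b m], z as [c p]; simpl in *. split. lia.
  rewrite !ext_raw_r by auto. rewrite H2. auto.
Qed.

Lemma raw_assoc x y z : composable x y -> composable y z -> raw (raw x y) z = raw x (raw y z).
Proof.
  intros H1 H2. apply comp_cond in H1. apply comp_cond in H2.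
  destruct x as [a n], y as [b m], z as [c p]; unfold raw; simpl in *. f_equal; [|lia].
  rewrite phn_comp by auto. rewrite phn_add. rewrite comp_assoc; auto; side.
Qed.

Definition HM : Type := {x : Pr | reduced x}.
Definition Hsrc (u : HM) : ob C := src (fst (proj1_sig u)).
Definition Htgt (u : HM) : ob C := mt (proj1_sig u).
Definition Hidm (o : ob C) : HM := exist _ (idm o, 0) (or_introl eq_refl).
Definition Hcomp (u w : HM) : HM := exist _ (norm (raw (proj1_sig u) (proj1_sig w))) (norm_red _).

Lemma HM_eq (u w : HM) : proj1_sig u = proj1_sig w -> u = w.
Proof.
  destruct u as [x p], w as [y q]; simpl. intros ->. f_equal. apply proof_irrelevance.
Qed.

Definition Hc : Cat.
Proof.
  refine {| ob := ob C; mor := HM; src := Hsrc; tgt := Htgt; idm := Hidm; comp := Hcomp |}.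
  - intros o. apply src_id.
  - intros o. apply tgt_id.
  - intros u w H. unfold Hsrc, Hcomp; simpl. rewrite norm_src, raw_src; auto.
  - intros u w H. unfold Htgt, Hcomp; simpl. rewrite norm_mt, raw_mt; auto.
  - intros u. apply HM_eq. destruct u as [[a n] R]; unfold Hcomp, Hsrc; simpl.
    unfold raw; simpl. rewrite id_comp. apply norm_id; auto.
  - intros u. apply HM_eq. destruct u as [[a n] R]; unfold Hcomp, Htgt, mt; simpl.
    unfold raw; simpl. rewrite phn_id, phOn_psOn, comp_id, Nat.add_0_r. apply norm_id; auto.
  - intros u v w H1 H2. apply HM_eq. unfold Hcomp; simpl.
    destruct u as [x Rx], v as [y Ry], w as [z Rz]. unfold Htgt, Hsrc in *; simpl in *.
    apply norm_eq. apply sim_trans with (raw (raw x y) z).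
    + apply raw_sim_l. unfold composable. rewrite norm_mt, raw_mt; auto. apply sim_sym, norm_sim.
    + rewrite raw_assoc by auto. apply raw_sim_r.
      unfold composable. rewrite raw_src; auto. apply norm_sim.
Defined.

Lemma inv_chain1 (a c : mor C) n k : tgt a = src c -> E k (src a) = comp a c ->
  comp a (phn n (comp (E n (psOn n (tgt a))) c)) = E (n + k) (src a).
Proof.
  intros H1 H2.
  rewrite phn_comp by side. rewrite phn_E, phOn_psOn.
  rewrite <- comp_assoc by side. rewrite E_nat.
  rewrite comp_assoc by side. rewrite <- phn_comp by side. rewrite <- H2, phn_E, E_add. auto.
Qed.

Lemma inv_chain0 (a c : mor C) k : tgt a = src c -> E k (src a) = comp a c ->
  comp c (phn k a) = E k (tgt a).
Proof.
  intros H1 H2. assert (Htc : tgt c = phOn k (src a)) by (rewrite <- (E_tgt k (src a)), H2; side).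
  apply (lcancel a); try side.
  rewrite <- comp_assoc by side. rewrite <- H2. symmetry. apply E_nat.
Qed.

Lemma inv_chain2 (a c : mor C) n k : tgt a = src c -> E k (src a) = comp a c ->
  comp (comp (E n (psOn n (tgt a))) c) (phn k a) = E (n + k) (psOn n (tgt a)).
Proof.
  intros H1 H2. assert (Hk := inv_chain0 a c k H1 H2).
  assert (Htc : tgt c = phOn k (src a)) by (rewrite <- (E_tgt k (src a)), H2; side).
  rewrite comp_assoc by side. rewrite Hk, E_add, phOn_psOn. auto.
Qed.

Lemma Hc_groupoid : is_groupoid Hc.
Proof.
  intros [[a n] R].
  destruct (prefix_E (l a) a (le_n _)) as [c [Hc1 Hc2]].
  set (k := l a) in *.
  set (w0 := psOn n (tgt a)).
  assert (Htc : tgt c = phOn k (src a)).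
  { rewrite <- (E_tgt k (src a)), Hc2. side. }
  set (y := (comp (E n w0) c, k)).
  exists (exist _ (norm y) (norm_red y)).
  assert (Hsy : src (comp (E n w0) c) = w0) by (unfold w0; side).
  assert (Cxy : composable (a, n) y) by (unfold composable, mt; simpl; rewrite Hsy; auto).
  assert (Cyx : composable y (a, n)) by (unfold composable, mt, y; simpl; rewrite tgt_comp by (unfold w0; side); rewrite Htc, psOn_phOn; auto).
  split; [|split; [|split]].
  - simpl. unfold Hsrc, Htgt; simpl. rewrite norm_src. simpl. rewrite Hsy. auto.
  - simpl. unfold Hsrc, Htgt; simpl. rewrite norm_mt. apply Cyx.
  - apply HM_eq. simpl. transitivity (norm (raw (a, n) y)).
    + apply norm_eq. apply raw_sim_r. unfold composable. rewrite norm_src. apply Cxy. apply sim_sym, norm_sim.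
    + unfold Hsrc; simpl. rewrite <- (norm_id (idm (src a), 0)) by (left; auto). apply norm_eq.
      exists 0, (n + k). simpl. split. lia. rewrite ext_0. unfold ext. rewrite tgt_id, id_comp' by side.
      apply inv_chain1; auto.
  - apply HM_eq. simpl. transitivity (norm (raw y (a, n))).
    + apply norm_eq. apply raw_sim_l. unfold composable. rewrite norm_mt. apply Cyx. apply sim_sym, norm_sim.
    + unfold Htgt; simpl. rewrite <- (norm_id (idm (mt (a, n)), 0)) by (left; auto). apply norm_eq.
      exists 0, (k + n). simpl. split. lia. rewrite ext_0. unfold ext. rewrite tgt_id, id_comp' by side.
      unfold mt; simpl. rewrite Nat.add_comm. apply inv_chain2; auto.
Qed.

Definition Jf : Functor C Hc.
Proof.
  refine (@Build_Functor C Hc (fun o => o) (fun p => (exist _ (p, 0) (or_introl eq_refl) : HM)) _ _ _ _).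
  - intros f. reflexivity.
  - intros f. reflexivity.
  - intros o. reflexivity.
  - intros f g H. apply HM_eq. simpl. symmetry. exact (norm_id (comp f g, 0) (or_introl eq_refl)).
Defined.

Lemma J_inj (p q : mor C) : fmor Jf p = fmor Jf q -> p = q.
Proof. intros H. apply (f_equal (fun u : HM => fst (proj1_sig u))) in H. exact H. Qed.

Variable Eg : Cat.
Variable iota : Functor C Eg.
Hypothesis HEg : is_groupoid Eg.
Hint Rewrite ginv_src ginv_tgt : catdb.

Definition Graw (x : Pr) : mor Eg :=
  comp (fmor iota (fst x)) (ginv HEg (fmor iota (E (snd x) (mt x)))).

Lemma Graw_ext (a : mor C) n k : Graw (ext a k, n + k) = Graw (a, n).
Proof.
  unfold Graw, mt; simpl. rewrite ext_tgt, psOn_phOn_add.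
  rewrite E_add, phOn_psOn. unfold ext.
  rewrite fcomp by side. rewrite (fcomp _ _ iota (E n (psOn n (tgt a)))) by side.
  rewrite ginv_comp by side. apply g_mid; side.
Qed.

Lemma Graw_sim x y : sim x y -> Graw x = Graw y.
Proof.
  destruct x as [a n], y as [b m]; intros [k [j [H1 H2]]]. simpl in *.
  rewrite <- (Graw_ext a n k), <- (Graw_ext b m j), H1, H2. auto.
Qed.

Lemma Graw_raw x y : composable x y -> Graw (raw x y) = comp (Graw x) (Graw y).
Proof.
  intros H. assert (Hc' := comp_cond x y H).
  destruct x as [a n], y as [b m]. unfold composable, mt in H; simpl in H, Hc'.
  unfold Graw, raw, mt; simpl.
  rewrite tgt_comp by auto. rewrite phn_tgt, (Nat.add_comm n m), psOn_phOn_add, E_add, phOn_psOn.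
  rewrite H.
  assert (K : comp (ginv HEg (fmor iota (E n (src b)))) (fmor iota b) =
              comp (fmor iota (phn n b)) (ginv HEg (fmor iota (E n (tgt b))))).
  { apply g_swap; try side. rewrite <- !fcomp by side. f_equal. apply E_nat. }
  rewrite fcomp by side. rewrite (fcomp _ _ iota (E m (psOn m (tgt b)))) by side.
  rewrite ginv_comp by side.
  rewrite (comp_assoc Eg (fmor iota a) (ginv HEg (fmor iota (E n (src b))))
             (comp (fmor iota b) (ginv HEg (fmor iota (E m (psOn m (tgt b))))))) by side.
  rewrite <- (comp_assoc Eg (ginv HEg (fmor iota (E n (src b)))) (fmor iota b)
             (ginv HEg (fmor iota (E m (psOn m (tgt b)))))) by side.
  rewrite K.
  rewrite (comp_assoc Eg (fmor iota (phn n b)) (ginv HEg (fmor iota (E n (tgt b))))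
             (ginv HEg (fmor iota (E m (psOn m (tgt b)))))) by side.
  rewrite <- comp_assoc by side. rewrite !comp_assoc by side. auto.
Qed.

Definition Gf : Functor Hc Eg.
Proof.
  refine (@Build_Functor Hc Eg (fob iota) (fun u : HM => Graw (proj1_sig u)) _ _ _ _).
  - intros [[a n] R]. unfold Graw, mt; simpl. rewrite src_comp by side. apply fsrc.
  - intros [[a n] R]. unfold Graw, mt; simpl. rewrite tgt_comp by side. unfold Htgt, mt; simpl. side.
  - intros o. unfold Graw, mt; simpl. rewrite tgt_id, !fid, ginv_idm. apply comp_id'. side.
  - intros [x Rx] [y Ry] H. simpl. unfold Htgt, Hsrc in H; simpl in H.
    rewrite <- (Graw_sim _ _ (norm_sim _)). apply Graw_raw. auto.
Defined.

Lemma Gf_J (p : mor C) : fmor Gf (fmor Jf p) = fmor iota p.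
Proof.
  simpl. unfold Graw, mt; simpl. rewrite fid, ginv_idm. apply comp_id'. side.
Qed.

Lemma Jf_ob o : fob Jf o = o. Proof. reflexivity. Qed.
Hint Rewrite Jf_ob : catdb.

Definition Hinv := ginv Hc_groupoid.

Definition le (u w : mor Hc) : Prop := exists p : mor C, src p = tgt u /\ w = comp u (fmor Jf p).

Lemma J_comp (p q : mor C) : tgt p = src q -> fmor Jf (comp p q) = comp (fmor Jf p) (fmor Jf q).
Proof. apply fcomp. Qed.

Lemma le_refl u : le u u.
Proof. exists (@idm C (tgt u)). split. apply src_id. rewrite fid. symmetry. apply comp_id. Qed.

Lemma le_src u w : le u w -> src w = src u.
Proof. intros [p [H ->]]. side. Qed.

Lemma le_trans u v w : le u v -> le v w -> le u w.
Proof.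
  intros [p [H1 ->]] [q [H2 ->]]. exists (comp p q). split. side.
  rewrite J_comp by side. rewrite comp_assoc; auto; side.
Qed.

Lemma le_antisym u w : le u w -> le w u -> u = w.
Proof.
  intros [p [H1 E1]] [q [H2 E2]].
  assert (Hpq : tgt p = src q) by (rewrite H2, E1; side).
  assert (E3 : comp u (fmor Jf (comp p q)) = comp u (idm (tgt u))).
  { rewrite comp_id. rewrite J_comp by auto. rewrite <- comp_assoc by side. congruence. }
  apply (gcancel_l _ Hc_groupoid) in E3; try side.
  change (idm (tgt u)) with (fmor Jf (@idm C (tgt u))) in E3. apply J_inj in E3.
  assert (l p = 0) by (assert (Hl := Hl_add p q Hpq); rewrite E3, l_idm in Hl; lia).
  apply Hl_0 in H. apply is_id_idm in H. rewrite E1, H, fid, H1. symmetry. apply comp_id'. reflexivity.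
Qed.

Lemma le_left h u w : tgt h = src u -> tgt h = src w -> (le u w <-> le (comp h u) (comp h w)).
Proof.
  intros H1 H2. split.
  - intros [p [P1 ->]]. exists p. split. side. rewrite comp_assoc; auto; side.
  - intros [p [P1 P2]]. exists p. split. side.
    rewrite comp_assoc in P2 by side. apply (gcancel_l _ Hc_groupoid) in P2; auto. side.
Qed.

Lemma le_J (p q : mor C) : prefix p q -> le (fmor Jf p) (fmor Jf q).
Proof. intros [z [H ->]]. exists z. split. side. apply J_comp; auto. Qed.

Definition D (u : mor Hc) : mor Hc := comp u (fmor Jf (Delta (tgt u))).
Lemma D_src u : src (D u) = src u. Proof. unfold D. side. Qed.
Lemma D_tgt u : tgt (D u) = fob phi (tgt u). Proof. unfold D. side. Qed.
Hint Rewrite D_src D_tgt : catdb.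

Lemma le_D u : le u (D u).
Proof. exists (Delta (tgt u)). split; auto. Qed.

Lemma D_mono u w : le u w -> le (D u) (D w).
Proof.
  intros [p [H ->]]. exists (fmor phi p). split. side.
  unfold D. rewrite comp_assoc by side. rewrite <- J_comp by side.
  rewrite tgt_comp by side. simpl fob. rewrite ftgt. simpl fob.
  rewrite HDn, H. rewrite J_comp by side. rewrite comp_assoc; auto; side.
Qed.

Lemma D_refl u w : le (D u) (D w) -> le u w.
Proof.
  intros [p [H1 H2]]. set (q := fmor psi p).
  assert (Hq : fmor phi q = p) by apply Hpp_m'.
  assert (Sq : src q = tgt u) by (unfold q; rewrite fsrc, H1, D_tgt; auto).
  exists q. split; auto.
  assert (E1 : comp (comp u (fmor Jf q)) (fmor Jf (Delta (tgt q))) = D w).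
  { rewrite H2. unfold D. rewrite comp_assoc by side. rewrite <- J_comp by side.
    rewrite HDn, Hq, Sq. rewrite J_comp by side. rewrite comp_assoc; auto; side. }
  assert (Tq : tgt q = tgt w).
  { apply (f_equal tgt) in E1. rewrite D_tgt in E1. rewrite tgt_comp in E1 by side.
    assert (E4 : tgt (Delta (tgt q)) = fob phi (tgt w)) by exact E1. rewrite HDt in E4.
    rewrite <- (Hpp_o (tgt q)), E4, Hpp_o. auto. }
  unfold D in E1. rewrite Tq in E1. symmetry.
  apply (gcancel_r _ Hc_groupoid) in E1; auto; side.
Qed.

Definition Dinv (u : mor Hc) : mor Hc := comp u (Hinv (fmor Jf (Delta (fob psi (tgt u))))).
Hint Rewrite (ginv_src Hc Hc_groupoid) (ginv_tgt Hc Hc_groupoid) : catdb.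
Lemma Dinv_src u : src (Dinv u) = src u. Proof. unfold Dinv, Hinv. side. Qed.
Lemma Dinv_tgt u : tgt (Dinv u) = fob psi (tgt u). Proof. unfold Dinv, Hinv. side. Qed.
Hint Rewrite Dinv_src Dinv_tgt : catdb.

Lemma D_Dinv u : D (Dinv u) = u.
Proof.
  unfold D. rewrite Dinv_tgt. unfold Dinv, Hinv.
  rewrite comp_assoc by side. rewrite ginv_l. apply comp_id'. side.
Qed.

Lemma Dinv_D u : Dinv (D u) = u.
Proof. unfold Dinv, Hinv. rewrite D_tgt, Hpp_o. unfold D. apply g_cc. side. Qed.

Definition Dn r u := Nat.iter r D u.
Definition Dinvn r u := Nat.iter r Dinv u.
Lemma Dn_S r u : Dn (S r) u = D (Dn r u).
Proof. reflexivity. Qed.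
Lemma Dn_S' r u : Dn (S r) u = Dn r (D u).
Proof. apply Nat.iter_succ_r. Qed.

Lemma Dn_src r u : src (Dn r u) = src u.
Proof. induction r; simpl; auto. fold (Dn r u). rewrite D_src; auto. Qed.
Lemma Dinvn_src r u : src (Dinvn r u) = src u.
Proof. induction r; simpl; auto. fold (Dinvn r u). rewrite Dinv_src; auto. Qed.
Hint Rewrite Dn_src Dinvn_src : catdb.

Lemma Dn_formula r u : Dn r u = comp u (fmor Jf (E r (tgt u))).
Proof.
  induction r.
  - change (u = comp u (@idm Hc (tgt u))). symmetry. apply comp_id.
  - rewrite Dn_S, IHr. unfold D. rewrite comp_assoc by side.
    rewrite <- J_comp by side. rewrite E_S_r. do 3 f_equal. side.
Qed.

Lemma Dn_mono r u w : le u w <-> le (Dn r u) (Dn r w).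
Proof.
  induction r; simpl. tauto. fold (Dn r u) (Dn r w). split.
  - intros H. apply D_mono, IHr, H.
  - intros H. apply IHr, D_refl, H.
Qed.

Lemma le_Dn r u : le u (Dn r u).
Proof. induction r; simpl. apply le_refl. fold (Dn r u). eapply le_trans; [apply IHr|apply le_D]. Qed.

Lemma Dn_Dinvn r u : Dn r (Dinvn r u) = u.
Proof.
  revert u; induction r; intros u. reflexivity.
  change (Dinvn (S r) u) with (Dinv (Dinvn r u)). rewrite Dn_S', D_Dinv. apply IHr.
Qed.

Lemma Dinvn_Dn r u : Dinvn r (Dn r u) = u.
Proof.
  revert u; induction r; intros u. reflexivity.
  rewrite Dn_S. unfold Dinvn. rewrite Nat.iter_succ_r. rewrite Dinv_D. apply IHr.
Qed.

Lemma le_Dinvn r u : le (Dinvn r u) u.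
Proof. rewrite <- (Dn_Dinvn r u) at 2. apply le_Dn. Qed.

Lemma Dn_left r h u : tgt h = src u -> Dn r (comp h u) = comp h (Dn r u).
Proof.
  intros H. rewrite !Dn_formula. rewrite tgt_comp by auto. rewrite comp_assoc; auto; side.
Qed.

Lemma Dn_add r s u : Dn (r + s) u = Dn r (Dn s u).
Proof. apply Nat.iter_add. Qed.


Definition Bm (s : ob C) (N : nat) : mor Hc := exist _ (norm (idm s, N)) (norm_red _) : HM.

Lemma lower_exists (u : mor Hc) : exists N0, forall N, N0 <= N -> le (Bm (src u) N) u.
Proof.
  destruct u as [[a n] R]. exists n. intros N HN.
  set (k := N - n). set (q := psn N (ext a k)).
  exists q. split.
  - unfold q, Bm. simpl. unfold Htgt, Hsrc. simpl. rewrite norm_mt. unfold mt; simpl. rewrite psn_src, ext_src, tgt_id. auto.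
  - apply HM_eq. unfold Bm. simpl. unfold Hsrc. simpl. symmetry.
    transitivity (norm (raw (idm (src a), N) (q, 0))).
    + apply norm_eq. apply raw_sim_l. unfold composable. rewrite norm_mt. unfold mt, q; simpl.
      rewrite psn_src, ext_src, tgt_id. auto. apply sim_sym, norm_sim.
    + rewrite <- (norm_id (a, n) R). apply norm_eq. unfold raw, q; simpl. rewrite phn_psn.
      rewrite id_comp' by side. exists 0, k. simpl. split. unfold k; lia. rewrite ext_0. auto.
Qed.

Lemma lower2 (u w : mor Hc) : src u = src w -> exists h, le h u /\ le h w.
Proof.
  intros H. destruct (lower_exists u) as [N1 H1]. destruct (lower_exists w) as [N2 H2].
  exists (Bm (src u) (N1 + N2)). split. apply H1; lia. rewrite H. apply H2; lia.
Qed.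

Lemma join_exists (u w : mor Hc) : src u = src w ->
  exists m, le u m /\ le w m /\ forall c, le u c -> le w c -> le m c.
Proof.
  intros H. destruct (lower2 u w H) as [h [[p [P1 P2]] [q [Q1 Q2]]]].
  destruct (Hlat (tgt h) p q P1 Q1) as [[j [J1 [J2 [J3 J4]]]] _].
  exists (comp h (fmor Jf j)). split; [|split].
  - destruct J2 as [z [Z1 Z2]]. exists z. split. rewrite P2. side.
    rewrite Z2, J_comp, P2 by auto. rewrite comp_assoc; auto; side.
  - destruct J3 as [z [Z1 Z2]]. exists z. split. rewrite Q2. side.
    rewrite Z2, J_comp, Q2 by auto. rewrite comp_assoc; auto; side.
  - intros c [z1 [A1 A2]] [z2 [B1 B2]].
    assert (Tp : tgt u = tgt p) by (rewrite P2; side).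
    assert (Tq : tgt w = tgt q) by (rewrite Q2; side).
    assert (E1 : c = comp h (fmor Jf (comp p z1))).
    { rewrite A2, P2, J_comp by congruence. rewrite comp_assoc; auto; side. }
    assert (E2 : c = comp h (fmor Jf (comp q z2))).
    { rewrite B2, Q2, J_comp by congruence. rewrite comp_assoc; auto; side. }
    assert (E3 : comp p z1 = comp q z2).
    { apply J_inj. apply (gcancel_l _ Hc_groupoid h); try side; congruence. }
    assert (Pj : prefix j (comp p z1)).
    { apply J4. side. apply prefix_comp; congruence. rewrite E3. apply prefix_comp; congruence. }
    destruct Pj as [z [Z1 Z2]]. exists z. split. side.
    rewrite E1, Z2, J_comp by auto. rewrite comp_assoc; auto; side.
Qed.

Lemma prefix_ext (p q : mor C) r : src q = src p -> l q <= r -> prefix q (ext p r).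
Proof.
  intros H Hl. unfold ext. rewrite E_nat.
  apply prefix_trans with (E r (src q)). apply prefix_E; auto.
  rewrite H. apply prefix_comp. side.
Qed.

Lemma connect (u w : mor Hc) : src u = src w -> exists r, le u (Dn r w) /\ le w (Dn r u).
Proof.
  intros H. destruct (lower2 u w H) as [h [[p [P1 P2]] [q [Q1 Q2]]]].
  exists (l p + l q). rewrite P2, Q2.
  rewrite !Dn_left by side. rewrite !Dn_formula. rewrite <- !J_comp by side.
  split; apply le_left; try side; apply le_J; apply prefix_ext; try congruence; lia.
Qed.

Lemma interval_fin (v : mor Hc) r : exists Ws : list (mor Hc),
  forall w, le v (Dn r w) -> le w (Dn r v) -> In w Ws.
Proof.
  exists (map (fun q => Dinvn r (comp v (fmor Jf q))) (plist (l (E (r + r) (tgt v))))).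
  intros w [q [Q1 Q2]] [p [P1 P2]].
  apply in_map_iff. exists q. split. rewrite <- Q2. apply Dinvn_Dn.
  apply plist_spec. apply prefix_l.
  assert (Tq : tgt q = phOn r (src p)).
  { assert (X := f_equal tgt Q2). rewrite Dn_formula in X. rewrite !tgt_comp in X by side.
    change (tgt (E r (tgt w)) = tgt q) in X. rewrite E_tgt in X. rewrite P1. auto. }
  assert (E1 : Dn (r + r) v = comp v (fmor Jf (comp q (phn r p)))).
  { rewrite Dn_add, P2. rewrite Dn_left by side. rewrite Dn_formula.
    change (tgt (fmor Jf p)) with (tgt p).
    rewrite <- J_comp by side. rewrite E_nat. rewrite J_comp by side.
    rewrite <- comp_assoc by side. rewrite P1. rewrite <- Dn_formula. rewrite Q2.
    rewrite comp_assoc by side. rewrite <- J_comp by side. reflexivity. }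
  rewrite Dn_formula in E1. apply (gcancel_l _ Hc_groupoid) in E1; try side.
  apply J_inj in E1. exists (phn r p). split. rewrite phn_src; auto. auto.
Qed.

Lemma max_exists (S : mor Hc -> Prop) (a b : mor Hc) :
  (forall y, S y -> le a y /\ le y b) -> forall y0, S y0 ->
  exists y, S y /\ forall y', S y' -> le y y' -> y' = y.
Proof.
  intros HS y0 Hy0. destruct (HS y0 Hy0) as [Hay0 Hy0b].
  destruct (le_trans _ _ _ Hay0 Hy0b) as [qb [QB1 QB2]].
  assert (main : forall n y (p : mor C), S y -> src p = tgt a -> y = comp a (fmor Jf p) ->
            l qb - l p <= n -> exists y, S y /\ forall y', S y' -> le y y' -> y' = y).
  { induction n; intros y p Sy Sp Ey Hn;
    (destruct (classic (exists y', S y' /\ le y y' /\ y' <> y)) as [[y' [S' [[z [Z1 Z2]] Hne]]] | Hno];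
     [ | exists y; split; auto; intros y' S' Le; apply NNPP; intro Hne; apply Hno; eauto ]).
    all: assert (Tz : tgt p = src z) by (rewrite Z1, Ey; side).
    all: assert (Ey' : y' = comp a (fmor Jf (comp p z)))
      by (rewrite Z2, Ey, J_comp by auto; rewrite comp_assoc; auto; side).
    all: destruct (HS y' S') as [_ [w [W1 W2]]].
    all: assert (Tw : tgt (comp p z) = src w) by (rewrite W1, Ey'; rewrite (tgt_comp Hc) by side; autorewrite with catdb; reflexivity).
    all: assert (Eq : qb = comp (comp p z) w)
      by (apply J_inj; apply (gcancel_l _ Hc_groupoid a); try side;
          rewrite <- QB2, W2, Ey', (J_comp (comp p z) w) by auto; rewrite comp_assoc; auto; side).
    all: assert (Lq : l qb = l p + l z + l w) by (rewrite Eq, !Hl_add; auto; side).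
    all: assert (Lz : 0 < l z)
      by (apply not_id_l; intros Hz; apply is_id_idm in Hz; apply Hne; rewrite Z2, Hz, fid, Z1;
          apply comp_id'; reflexivity).
    - lia.
    - apply (IHn y' (comp p z)); auto. side. rewrite Hl_add by auto. lia. }
  destruct Hay0 as [p0 [P1 P2]]. apply (main (l qb - l p0) y0 p0); auto.
Qed.

Section Graph.
Variable x0 : ob C.

Definition V : Type := {u : mor Hc | src u = x0}.

Lemma V_eq (u w : V) : proj1_sig u = proj1_sig w -> u = w.
Proof. destruct u as [u p], w as [w q]; simpl. intros ->. f_equal. apply proof_irrelevance. Qed.

Definition adjV (u w : V) : Prop :=
  proj1_sig u <> proj1_sig w /\ le (proj1_sig u) (D (proj1_sig w)) /\ le (proj1_sig w) (D (proj1_sig u)).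

Lemma ball_lemma r (u w : V) :
  dist_le adjV r u w <-> le (proj1_sig u) (Dn r (proj1_sig w)) /\ le (proj1_sig w) (Dn r (proj1_sig u)).
Proof.
  revert u w; induction r; intros u w.
  - simpl. split.
    + intros ->. split; apply le_refl.
    + intros [H1 H2]. apply V_eq. apply le_antisym; auto.
  - simpl dist_le. split.
    + intros [H | [w' [[Hn [A1 A2]] H]]].
      * apply IHr in H. destruct H as [H1 H2]. rewrite !Dn_S. split.
        eapply le_trans; [apply H1 | apply le_D]. eapply le_trans; [apply H2 | apply le_D].
      * apply IHr in H. destruct H as [H1 H2]. split.
        -- rewrite Dn_S. eapply le_trans; [apply A1 | apply D_mono; auto].
        -- rewrite Dn_S'. eapply le_trans; [apply H2 | apply Dn_mono; auto].
    + intros [H1 H2]. destruct u as [u Hu], w as [w Hw]; cbn [proj1_sig] in *.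
      assert (Hs : src (Dinv u) = src (Dinvn r w)) by (rewrite Dinv_src, Dinvn_src; congruence).
      destruct (join_exists _ _ Hs) as [m [M1 [M2 M3]]].
      assert (Hm : src m = x0) by (rewrite (le_src _ _ M1), Dinv_src; auto).
      assert (F1 : le u (D m)) by (rewrite <- (D_Dinv u); apply D_mono; auto).
      assert (F2 : le m (D u)).
      { apply M3. eapply le_trans; [|apply le_D]. rewrite <- (D_Dinv u) at 2. apply le_D.
        apply (Dn_mono r). rewrite Dn_Dinvn, <- Dn_S'. auto. }
      assert (F3 : le m (Dn r w)).
      { apply M3. apply D_refl. rewrite D_Dinv, <- Dn_S. auto.
        eapply le_trans; [apply le_Dinvn | apply le_Dn]. }
      assert (F4 : le w (Dn r m)) by (rewrite <- (Dn_Dinvn r w) at 1; apply Dn_mono; auto).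
      destruct (classic (m = u)) as [Emu|Nmu].
      * left. apply IHr. simpl. subst m. auto.
      * right. exists (exist _ m Hm). split. split; simpl; auto.
        apply IHr. simpl. auto.
Qed.

Lemma ball_iff r (c u : V) :
  ball adjV c r u <-> le (Dinvn r (proj1_sig c)) (proj1_sig u) /\ le (proj1_sig u) (Dn r (proj1_sig c)).
Proof.
  unfold ball. rewrite ball_lemma. split; intros [H1 H2]; split; auto.
  - apply (Dn_mono r). rewrite Dn_Dinvn. auto.
  - apply (Dn_mono r) in H1. rewrite Dn_Dinvn in H1. auto.
Qed.

Definition v0 : V := exist _ (@idm Hc x0) (src_id Hc x0).

Lemma helly : helly_graph adjV.
Proof.
  split; [|split].
  - split.
    + intros u w [H1 [H2 H3]]. split; auto.
    + intros u [H _]. auto.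
  - split. constructor. exact v0.
    intros [u Hu] [w Hw]. destruct (connect u w ltac:(congruence)) as [r [H1 H2]].
    exists r. apply ball_lemma. simpl. auto.
  - intros I c r H.
    destruct (classic (inhabited I)) as [[i0]|NI].
    2: { exists v0. intros i. exfalso. apply NI. constructor. exact i. }
    set (a := fun i => Dinvn (r i) (proj1_sig (c i))).
    set (b := fun i => Dn (r i) (proj1_sig (c i))).
    assert (Hab : forall i j, le (a i) (b j)).
    { intros i j. destruct (H i j) as [u [U1 U2]]. apply ball_iff in U1. apply ball_iff in U2.
      eapply le_trans; [apply U1 | apply U2]. }
    set (S := fun y => le (a i0) y /\ forall j, le y (b j)).
    destruct (max_exists S (a i0) (b i0)) with (y0 := a i0) as [y [[Y1 Y2] Y3]].
    { intros y [S1 S2]. auto. }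
    { split. apply le_refl. auto. }
    assert (Hy : src y = x0).
    { rewrite (le_src _ _ Y1). unfold a. rewrite Dinvn_src. apply (proj2_sig (c i0)). }
    exists (exist _ y Hy). intros i. apply ball_iff. simpl. split; [|apply Y2].
    assert (Hs : src y = src (a i)) by (unfold a; rewrite Dinvn_src, Hy; symmetry; apply (proj2_sig (c i))).
    destruct (join_exists _ _ Hs) as [m [M1 [M2 M3]]].
    assert (Sm : S m).
    { split. eapply le_trans; eauto. intros j. apply M3; auto. }
    assert (Emy : m = y) by (apply Y3; auto).
    subst m. auto.
Qed.

End Graph.

Lemma D_left h u : tgt h = src u -> D (comp h u) = comp h (D u).
Proof. intros H. unfold D. rewrite tgt_comp by auto. rewrite comp_assoc; auto; side. Qed.

Lemma comp_J_E (a : mor C) n (R : reduced (a, n)) :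
  comp (exist _ (a, n) R : mor Hc) (fmor Jf (E n (psOn n (tgt a)))) = fmor Jf a.
Proof.
  apply HM_eq. simpl. unfold raw; simpl. rewrite phn_E, phOn_psOn, Nat.add_0_r.
  change (norm (ext a n, n) = (a, 0)).
  rewrite <- (norm_id (a, 0)) by (left; auto). apply norm_eq.
  exists 0, n. simpl. split. lia. rewrite ext_0. auto.
Qed.

Lemma main_sec (HE : enveloping C Eg iota) (x : ob Eg) :
  exists (V : Type) (adj : V -> V -> Prop) (act : mor Eg -> V -> V),
    helly_graph adj /\ acts_geometrically x adj act.
Proof.
  destruct HE as [_ Huniv].
  destruct (Huniv Hc Jf Hc_groupoid) as [F' [[HF'o HF'm] _]].
  destruct (Huniv Eg iota HEg) as [F0 [_ Huniq]].
  assert (P1 : forall o, fob (Fcompose F' Gf) (fob iota o) = fob iota o).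
  { intros o. simpl. rewrite HF'o. reflexivity. }
  assert (P2 : forall f, fmor (Fcompose F' Gf) (fmor iota f) = fmor iota f).
  { intros f. simpl. rewrite HF'm. apply Gf_J. }
  destruct (Huniq _ P1 P2) as [B1 B2].
  destruct (Huniq (Fidentity Eg) (fun _ => eq_refl) (fun _ => eq_refl)) as [A1 A2].
  assert (GFo : forall o, fob Gf (fob F' o) = o).
  { intros o. specialize (B1 o). specialize (A1 o). change (fob Gf (fob F' o) = fob F0 o) in B1.
    change (o = fob F0 o) in A1. congruence. }
  assert (GFm : forall f, fmor Gf (fmor F' f) = f).
  { intros f. specialize (B2 f). specialize (A2 f). change (fmor Gf (fmor F' f) = fmor F0 f) in B2.
    change (f = fmor F0 f) in A2. congruence. }
  assert (FGm : forall u : mor Hc, fmor F' (fmor Gf u) = u).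
  { intros [[a n] R]. simpl. unfold Graw, mt; simpl.
    rewrite fcomp by side. rewrite HF'm.
    rewrite (fmor_ginv Eg Hc HEg Hc_groupoid F'). rewrite HF'm.
    apply (gcancel_r Hc Hc_groupoid (fmor Jf (E n (psOn n (tgt a))))).
    - rewrite tgt_comp by side. side.
    - change (psOn n (tgt a) = src (E n (psOn n (tgt a)))). rewrite E_src. reflexivity.
    - rewrite g_cc' by side. symmetry. apply comp_J_E. }
  set (x0 := fob F' x).
  assert (Hact : forall g, in_isotropy x g -> forall v : V x0, src (comp (fmor F' g) (proj1_sig v)) = x0).
  { intros g [G1 G2] [v Hv]. cbn [proj1_sig]. rewrite src_comp. rewrite fsrc, G1. auto.
    rewrite ftgt, G2, Hv. auto. }
  set (act := fun g (v : V x0) => match excluded_middle_informative (in_isotropy x g) with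
                | left Hg => exist _ (comp (fmor F' g) (proj1_sig v)) (Hact g Hg v) : V x0
                | right _ => v end).
  assert (act_val : forall g v, in_isotropy x g -> proj1_sig (act g v) = comp (fmor F' g) (proj1_sig v)).
  { intros g v Hg. unfold act. destruct (excluded_middle_informative _); [reflexivity | contradiction]. }
  assert (Tg : forall g, in_isotropy x g -> tgt (fmor F' g) = x0).
  { intros g [_ G2]. rewrite ftgt, G2. auto. }
  assert (Sg : forall g, in_isotropy x g -> src (fmor F' g) = x0).
  { intros g [G1 _]. rewrite fsrc, G1. auto. }
  exists (V x0), (adjV x0), act. split; [apply helly | split; [|split]].
  -
    split; [|split].
    + intros v. apply V_eq. rewrite act_val by (split; [apply src_id | apply tgt_id]).
      rewrite fid. apply id_comp'. destruct v; simpl; auto.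
    + intros g h v Hg Hh. apply V_eq.
      assert (Hgh : in_isotropy x (comp g h)).
      { destruct Hg as [G1 G2], Hh as [H1 H2]. split.
        rewrite src_comp; congruence. rewrite tgt_comp; congruence. }
      rewrite !act_val by auto.
      rewrite fcomp by (destruct Hg, Hh; congruence).
      rewrite comp_assoc; auto. rewrite Tg, Sg; auto. rewrite Tg by auto. destruct v; simpl; auto.
    + intros g u w Hg. unfold adjV. rewrite !act_val by auto.
      destruct u as [u Hu], w as [w Hw]; cbn [proj1_sig].
      assert (T1 : tgt (fmor F' g) = src u) by (rewrite Tg; auto).
      assert (T2 : tgt (fmor F' g) = src w) by (rewrite Tg; auto).
      rewrite !D_left by auto.
      rewrite <- !le_left by (auto; rewrite D_src; auto).
      split; intros [A [B C']]; split; auto.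
      * intros E'. apply A. apply (gcancel_l _ Hc_groupoid (fmor F' g)); auto.
      * intros E'. apply A. congruence.
  -
    intros v r. destruct (interval_fin (proj1_sig v) r) as [Ws HWs].
    exists (map (fun w => fmor Gf (comp w (Hinv (proj1_sig v)))) Ws).
    intros g Hg Hd. apply ball_lemma in Hd. rewrite act_val in Hd by auto.
    apply in_map_iff. exists (comp (fmor F' g) (proj1_sig v)). split.
    + unfold Hinv. rewrite g_cc. apply GFm. rewrite Tg by auto. destruct v; simpl; auto.
    + apply HWs; apply Hd.
  -
    set (pick := fun o => epsilon (inhabits (v0 x0)) (fun w : V x0 => tgt (proj1_sig w) = o)).
    exists (map pick (map src SL)).
    intros [w Hw].
    assert (Hk : tgt (proj1_sig (pick (tgt w))) = tgt w).
    { apply (epsilon_spec (inhabits (v0 x0)) (fun w' : V x0 => tgt (proj1_sig w') = tgt w)).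
      exists (exist _ w Hw). reflexivity. }
    destruct (pick (tgt w)) as [k Hks] eqn:Ek. cbn [proj1_sig] in Hk.
    exists (exist _ k Hks), (fmor Gf (comp w (Hinv k))).
    assert (Hiso : in_isotropy x (fmor Gf (comp w (Hinv k)))).
    { unfold Hinv. split.
      - rewrite fsrc. rewrite src_comp by side. rewrite Hw. apply GFo.
      - rewrite ftgt. rewrite tgt_comp by side. rewrite ginv_tgt, Hks. apply GFo. }
    split; [|split; auto].
    + rewrite <- Ek. apply in_map. apply in_map_iff. exists (@idm C (tgt w)). split. apply src_id.
      apply HSL. apply id_simple.
    + apply V_eq. rewrite act_val by auto. cbn [proj1_sig]. rewrite FGm. unfold Hinv.
      symmetry. apply g_cc'. congruence.
Qed.
End Main.

Theorem theorem4p9 (C : Cat) (HC : garside_finite_type C)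
  (E : Cat) (iota : Functor C E) (HE : enveloping C E iota) (x : ob E) :
  exists (V : Type) (adj : V -> V -> Prop) (act : mor E -> V -> V),
    helly_graph adj /\ acts_geometrically x adj act.
Proof.
  destruct HC as [phi [Delta [[Haut [Hnat [[l [Hl1 Hl2]] [Hcanc [Hatom Hlat]]]]] [SL HSL]]]].
  destruct Haut as [psi [Ho1 [Ho2 [Hm1 Hm2]]]].
  destruct Hnat as [HD HDn].
  apply (main_sec C phi psi Delta l SL) with (Eg := E) (iota := iota); auto.
  - intros o; apply HD.
  - intros o; apply HD.
  - intros x0; apply Hlat.
  - apply HE.
Qed.
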